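(* Let $1\le p<\infty$, $X=\ell_p(\mathbb Z_+)$, and let $\mathbf u=(u_n)_{n\ge1}$, $\mathbf v=(v_n)_{n\ge1}$ be bounded sequences of non-zero scalars. Assume that either $\liminf_{n\to\infty}\left|\frac{u_1\cdots u_n}{v_1\cdots v_n}\right|=0$ or $\limsup_{n\to\infty}\left|\frac{u_1\cdots u_n}{v_1\cdots v_n}\right|=\infty$. Then whenever $m_{\mathbf u}$ is a $B_{\mathbf u}$-invariant and $m_{\mathbf v}$ a $B_{\mathbf v}$-invariant Borel probability measure on $X$ with $m_{\mathbf u}(\ker e_0^* )=0=m_{\mathbf v}(\ker e_0^* )$, the measures $m_{\mathbf u}$ and $m_{\mathbf v}$ are mutually singular.
   Context: $(e_n)_{n\ge0}$ is the canonical basis of $\ell_p(\mathbb Z_+)$ (over $\mathbb R$ or $\mathbb C$) and $e_0^*$ is the first coordinate functional. For a bounded sequence $\mathbf w$ of non-zero scalars, $B_{\mathbf w}$ is the weighted backward shift $B_{\mathbf w}e_0=0$, $B_{\mathbf w}e_n=w_ne_{n-1}$ ($n\ge1$). Invariance of $m$ under $T$ means $m(T^{-1}(A))=m(A)$ for all Borel $A$. *)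

(* Defs.v *)
From HB Require Import structures.
From mathcomp Require Import all_boot all_order all_algebra.
From mathcomp Require Import all_classical all_reals all_analysis.
From mathcomp.real_closed Require Import complex.
Set Implicit Arguments. Unset Strict Implicit. Unset Printing Implicit Defensive.
Import Order.TTheory GRing.Theory Num.Theory.
Local Open Scope classical_set_scope.
Local Open Scope ring_scope.

Record scalars (R : realType) := Scalars {
  sc_type :> fieldType;
  sc_abs : sc_type -> R;
  sc_abs0 : sc_abs 0 = 0 }.

Definition real_scalars (R : realType) : scalars R :=
  @Scalars R R (@Num.norm _ R) (@normr0 _ R).
Definition complex_scalars (R : realType) : scalars R :=
  @Scalars R R[i] (@Normc.normc R) (@Normc.normc0 R).
Definition scalars_of (R : realType) (cplx : bool) : scalars R :=
  if cplx then complex_scalars R else real_scalars R.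

Section lp_space.
Context {R : realType} (K : scalars R) (p : {posnum R}).
Local Open Scope ereal_scope.

Definition lp_mem (x : nat -> K) : Prop :=
  \sum_(k <oo) ((sc_abs (x k)) `^ p%:num)%:E < +oo.

Lemma lp_mem0 : lp_mem (fun _ => 0%R).
Proof.
rewrite /lp_mem sc_abs0 powR0 ?gt_eqF //.
by rewrite eseries0 // ltry.
Qed.

Definition lp := {x : nat -> K | lp_mem x}.
HB.instance Definition _ := gen_eqMixin lp.
HB.instance Definition _ := gen_choiceMixin lp.
HB.instance Definition _ := isPointed.Build lp (exist _ _ lp_mem0).

(* open sets of the norm topology of l_p : x has a ball around it inside A;
   the ball of radius e^(1/p) is { y | \sum_k |x_k - y_k|^p < e } *)
Definition lp_open (A : set lp) : Prop :=
  forall x, A x -> exists e : R, (0 < e)%R /\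
    forall y : lp,
      \sum_(k <oo) ((sc_abs (sval x k - sval y k)) `^ p%:num)%:E < e%:E -> A y.

End lp_space.

Notation lpB K p := (g_sigma_algebraType (@lp_open _ K p)).

(* weighted backward shift on sequences: (B_w x)_n = w_{n+1} x_{n+1}
   (w_0 is irrelevant; the weights are w_1, w_2, ...) *)
Definition bshift {R : realType} {K : scalars R} (w : nat -> K) (x : nat -> K)
  : nat -> K := fun n => (w n.+1 * x n.+1)%R.

Definition shift_invariant {R : realType} {K : scalars R} {p : {posnum R}}
  (w : nat -> K) (m : set (lpB K p) -> \bar R) : Prop :=
  forall A : set (lpB K p), measurable A ->
    m [set x | exists2 y, A y & sval y = bshift w (sval x)] = m A.

Definition prod_ratio {R : realType} {K : scalars R} (u v : nat -> K) (n : nat) : R :=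
  sc_abs ((\prod_(1 <= k < n.+1) u k) / (\prod_(1 <= k < n.+1) v k))%R.

(* Main.v *)
Require Import Defs.
From HB Require Import structures.
From mathcomp Require Import all_boot all_order all_algebra.
From mathcomp Require Import all_classical all_reals all_analysis.
From mathcomp.real_closed Require Import complex.
Import Order.TTheory GRing.Theory Num.Theory.
Local Open Scope classical_set_scope.
Local Open Scope ring_scope.

Section Abs.
Variables (R : realType) (cplx : bool).
Local Notation K := (scalars_of R cplx).
Local Notation ab := (@sc_abs R K).

Lemma ab_ge0 (x : K) : 0 <= ab x.
Proof. case: cplx x => x /=; last exact: normr_ge0.
by case: x => a b; rewrite /Normc.normc sqrtr_ge0. Qed.

Lemma abM (x y : K) : ab (x * y) = ab x * ab y.
Proof. case: cplx x y => x y /=; last exact: normrM. exact: Normc.normcM. Qed.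

Lemma abV (x : K) : ab (x^-1) = (ab x)^-1.
Proof. case: cplx x => x /=; last exact: normfV. exact: Normc.normcV. Qed.

Lemma abN (x : K) : ab (- x) = ab x.
Proof. case: cplx x => x /=. exact: (@normcN R x). exact: (@normrN _ R x). Qed.

Lemma abD (x y : K) : ab (x + y) <= ab x + ab y.
Proof. case: cplx x y => x y /=; last exact: ler_normD. exact: le_normcD. Qed.

Lemma ab1 : ab 1 = 1.
Proof. case: cplx => /=; last exact: normr1. exact: Normc.normc1. Qed.

Lemma ab_eq0 (x : K) : ab x = 0 -> x = 0.
Proof. case: cplx x => x /=; last by move/eqP; rewrite normr_eq0 => /eqP. exact: Normc.eq0_normc. Qed.
End Abs.

Section LP.
Variables (R : realType) (cplx : bool) (p : {posnum R}).
Local Notation K := (scalars_of R cplx).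
Local Notation ab := (@sc_abs R K).

Lemma term_le_series (f : nat -> R) n : (forall k, 0 <= f k) ->
  ((f n)%:E <= \sum_(k <oo) (f k)%:E)%E.
Proof.
move=> f0; rewrite (@nneseriesD1 _ _ n) //; last by move=> k _; rewrite lee_fin.
rewrite leeDl // nneseries_ge0 // => k _ _; by rewrite lee_fin f0.
Qed.

Definition Oset (c : K) (n : nat) (d : R) : set (lpB K p) :=
  [set x | ab (c * sval x n) < d].

Lemma Oset_open c n d : lp_open (Oset c n d).
Proof.
move=> x /= hx.
set a := ab (c * sval x n) in hx.
set eta := (d - a) / (ab c + 1).
have ac0 : 0 < ab c + 1 by rewrite ltr_wpDl // ab_ge0.
have eta0 : 0 < eta by rewrite divr_gt0 // subr_gt0.
exists (eta `^ p%:num); split; first by rewrite powR_gt0.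
move=> y hy; rewrite /Oset /=.
have h1 : ab (sval x n - sval y n) < eta.
  rewrite ltNge; apply/negP => hle.
  have hle2 : eta `^ p%:num <= ab (sval x n - sval y n) `^ p%:num.
    by apply: ge0_ler_powR => //; rewrite nnegrE ?ab_ge0 ?ltW.
  have := le_lt_trans (term_le_series (fun k => ab (sval x k - sval y k) `^ p%:num) n (fun k => powR_ge0 _ _)) hy.
  by rewrite lte_fin ltNge hle2.
have -> : c * sval y n = c * sval x n + - (c * (sval x n - sval y n)).
  by rewrite mulrBr opprB addrC subrK.
apply: (le_lt_trans (abD _ _ _ _)); rewrite abN [ab (c * (_ - _))]abM.
have : ab c * ab (sval x n - sval y n) <= ab c * eta.
  by rewrite ler_wpM2l // ?ab_ge0 // ltW.
move=> h2; apply: (le_lt_trans (lerD (lexx a) h2)).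
have -> : d = a + (ab c + 1) * eta by rewrite /eta mulrC divfK ?gt_eqF // addrC subrK.
by rewrite ltrD2l ltr_pM2r // ltrDl.
Qed.

Lemma Oset_meas c n d : measurable (Oset c n d).
Proof. by apply: sub_sigma_algebra; exact: Oset_open. Qed.

End LP.

Lemma series_shift_le (R : realType) (u : nat -> \bar R) : (forall k, (0 <= u k)%E) ->
  (\sum_(k <oo) u k.+1 <= \sum_(k <oo) u k)%E.
Proof.
move=> u0; apply: lime_le; first by apply: is_cvg_nneseries => n _ _; exact: u0.
apply: nearW => n /=.
apply: (le_trans _ (nneseries_lim_ge n.+1 _)); last by move=> k _ _; exact: u0.
by rewrite big_nat_recl // leeDr // u0.
Qed.

Section LP2.
Variables (R : realType) (cplx : bool) (p : {posnum R}).
Local Notation K := (scalars_of R cplx).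
Local Notation ab := (@sc_abs R K).

Lemma bshift_lp (w : nat -> K) (M : R) (hM : forall n, (1 <= n)%N -> ab (w n) <= M)
  (x : lp K p) : lp_mem p (bshift w (sval x)).
Proof.
have M0 : 0 <= M by apply: le_trans (hM 1%N isT); exact: ab_ge0.
have hx := svalP x; rewrite /lp_mem in hx *.
set S := (\sum_(k <oo) _)%E in hx.
have S0 : (0 <= S)%E by apply: nneseries_ge0 => k _ _; rewrite lee_fin powR_ge0.
have Sfin : S \is a fin_num by rewrite ge0_fin_numE.
apply: (@le_lt_trans _ _ ((M `^ p%:num)%:E * S)%E); last first.
  by rewrite -(fineK Sfin) -EFinM ltry.
apply: (@le_trans _ _ (\sum_(k <oo) ((M `^ p%:num)%:E * (ab (sval x k.+1) `^ p%:num)%:E))%E).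
  apply: lee_nneseries => [k _ _|k _]; first by rewrite lee_fin powR_ge0.
  rewrite -EFinM lee_fin /bshift abM -powRM ?ab_ge0 //.
  apply: ge0_ler_powR; rewrite ?nnegrE ?mulr_ge0 ?ab_ge0 //.
  by rewrite ler_wpM2r ?ab_ge0 // hM.
rewrite nneseriesZl; last by move=> k _; rewrite lee_fin powR_ge0.
apply: lee_pmul => //; first by rewrite lee_fin powR_ge0.
  by apply: nneseries_ge0 => k _ _; rewrite lee_fin powR_ge0.
have := @series_shift_le R (fun k => (ab (sval x k) `^ p%:num)%:E); apply => k; by rewrite lee_fin powR_ge0.
Qed.
End LP2.

Section Law.
Variables (R : realType) (cplx : bool) (p : {posnum R}).
Local Notation K := (scalars_of R cplx).
Local Notation ab := (@sc_abs R K).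

Definition W (w : nat -> K) n : K := \prod_(1 <= k < n.+1) w k.

Lemma W0 w : W w 0 = 1.
Proof. by rewrite /W big_geq. Qed.

Lemma WS w n : W w n.+1 = W w n * w n.+1.
Proof. by rewrite /W big_nat_recr. Qed.

Lemma W_neq0 w : (forall n, (1 <= n)%N -> w n != 0) -> forall n, W w n != 0.
Proof.
move=> hw; elim=> [|n ih]; first by rewrite W0 oner_neq0.
by rewrite WS mulf_neq0 // hw.
Qed.

Variables (m : probability (lpB K p) R) (w : nat -> K) (M : R)
  (hM : forall n, (1 <= n)%N -> ab (w n) <= M) (inv : shift_invariant w m).

Lemma law n d : m (Oset R cplx p (W w n) n d) = m (Oset R cplx p 1 0 d).
Proof.
elim: n => [|n ih]; first by rewrite W0.
rewrite -ih -(inv _ (Oset_meas R cplx p (W w n) n d)); congr (m _).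
apply/seteqP; split => x /=.
  rewrite /Oset /= WS -mulrA => hx.
  by exists (exist _ (bshift w (sval x)) (@bshift_lp R cplx p w M hM x)).
by move=> [y hy ey]; move: hy; rewrite /Oset /= ey /bshift WS mulrA.
Qed.
End Law.

Lemma small_measure d (T : measurableType d) (R : realType) (m : probability T R)
  (F : nat -> set T) : (forall i, measurable (F i)) ->
  (forall i j, (i <= j)%N -> F j `<=` F i) ->
  m (\bigcap_n F n) = 0%E -> forall e : R, 0 < e -> exists k, (m (F k) < e%:E)%E.
Proof.
move=> mF Fdec m0 e e0.
have cv : (m \o F) @ \oo --> m (\bigcap_n F n).
  apply: nonincreasing_cvg_mu => //.
  - by apply: (le_lt_trans (probability_le1 _ (mF 0%N))); rewrite ltry.
  - exact: bigcapT_measurable.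
  - by move=> i j ij; apply/subsetPset; exact: Fdec.
rewrite m0 in cv.
apply: contrapT => hn.
have hge : forall k, (e%:E <= m (F k))%E.
  by move=> k; rewrite leNgt; apply/negP => hk; apply: hn; exists k.
have : (e%:E <= limn (m \o F))%E.
  by apply: lime_ge; [apply/cvg_ex; exists 0%E | exact: nearW].
by rewrite (cvg_lim _ cv) // lee_fin leNgt e0.
Qed.

Section Small.
Variables (R : realType) (cplx : bool) (p : {posnum R}).
Local Notation K := (scalars_of R cplx).
Local Notation ab := (@sc_abs R K).
Local Notation O := (@Oset R cplx p).

Lemma ab0 : ab 0 = 0. Proof. exact: sc_abs0. Qed.

Lemma archi_inv (a : R) : 0 < a -> exists k : nat, k.+1%:R^-1 < a.
Proof.
move=> a0; have ia : 0 <= a^-1 by rewrite invr_ge0 ltW.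
have := archi_boundP ia; set k := Num.bound _ => hk.
exists k; rewrite -[a]invrK ltf_pV2 ?posrE ?invr_gt0 //.
by apply: (lt_le_trans hk); rewrite ler_nat.
Qed.

Lemma small_delta (m : probability (lpB K p) R) :
  m [set x | sval x 0%N = 0] = 0%E ->
  forall e, 0 < e -> exists2 dl, 0 < dl & (m (O 1 0 dl) < e%:E)%E.
Proof.
move=> m0 e e0.
have [|||k hk] := @small_measure _ _ _ m (fun k => O 1 0 (k.+1%:R^-1)) _ _ _ e e0.
- by move=> i; exact: Oset_meas.
- move=> i j ij x; rewrite /Oset /= => h; apply: (lt_le_trans h).
  by rewrite lef_pV2 ?posrE // ler_nat.
- rewrite -m0; congr (m _); apply/seteqP; split => x /=.
  + move=> hx; apply: ab_eq0; apply/eqP; rewrite eq_le ab_ge0 andbT.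
    rewrite leNgt; apply/negP => /archi_inv [k hk].
    by have := hx k I; rewrite /Oset /= mul1r => /(lt_trans hk); rewrite ltxx.
  + by move=> hx k _; rewrite /Oset /= hx mulr0 ab0.
- by exists k.+1%:R^-1 => //.
Qed.

Lemma small_tail (m : probability (lpB K p) R) :
  forall e, 0 < e -> exists2 M, 0 < M & (m (~` O 1 0 M) < e%:E)%E.
Proof.
move=> e e0.
have [|||k hk] := @small_measure _ _ _ m (fun k => ~` O 1 0 (k.+1%:R)) _ _ _ e e0.
- by move=> i; apply: measurableC; exact: Oset_meas.
- move=> i j ij x; rewrite /Oset /= => h h'; apply: h.
  by apply: (lt_le_trans h'); rewrite ler_nat.
- rewrite (_ : \bigcap_n _ = set0) ?measure0 //.
  apply/seteqP; split => x //= hx.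
  have := archi_boundP (ab_ge0 _ _ (1 * sval x 0%N)); set k := Num.bound _ => hk.
  apply: (hx k I); rewrite /Oset /=; apply: (lt_le_trans hk).
  by rewrite ler_nat.
- by exists k.+1%:R.
Qed.
End Small.

Section Sing.
Variables (R : realType) (cplx : bool) (p : {posnum R}).
Local Notation K := (scalars_of R cplx).
Local Notation ab := (@sc_abs R K).
Local Notation O := (@Oset R cplx p).
Local Notation W := (@W R cplx).

Lemma limsup_meas (F : nat -> set (lpB K p)) : (forall k, measurable (F k)) ->
  measurable (lim_sup_set F).
Proof.
move=> mF; apply: bigcapT_measurable => n.
by apply: bigcup_measurable => k _; exact: mF.
Qed.

Lemma sing (m1 m2 : probability (lpB K p) R) (w1 w2 : nat -> K) (M1 M2 : R)
  (hM1 : forall n, (1 <= n)%N -> ab (w1 n) <= M1)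
  (hM2 : forall n, (1 <= n)%N -> ab (w2 n) <= M2)
  (inv1 : shift_invariant w1 m1) (inv2 : shift_invariant w2 m2)
  (w2nz : forall n, (1 <= n)%N -> w2 n != 0)
  (m1ker : m1 [set x | sval x 0%N = 0] = 0%E)
  (hr : forall e, 0 < e -> exists n, ab (W w1 n / W w2 n) < e) :
  exists A : set (lpB K p), [/\ measurable A, m1 A = 0%E & m2 (~` A) = 0%E].
Proof.
pose eps k : R := 1 / (2 ^ k.+1)%:R.
have step : forall k, exists E : set (lpB K p),
    [/\ measurable E, (m1 E <= (eps k)%:E)%E & (m2 (~` E) <= (eps k)%:E)%E].
  move=> k; have ek : 0 < eps k by rewrite divr_gt0 // ltr0n expn_gt0.
  have [dl dl0 hdl] := @small_delta R cplx p m1 m1ker _ ek.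
  have [Mt Mt0 hMt] := @small_tail R cplx p m2 _ ek.
  have [n hn] := hr (dl / Mt) (divr_gt0 dl0 Mt0).
  exists (O (W w1 n) n dl); split.
  - exact: Oset_meas.
  - by rewrite (@law R cplx p m1 w1 M1 hM1 inv1); exact: ltW.
  - apply: (@le_trans _ _ (m2 (~` O (W w2 n) n Mt))).
      apply: le_measure; rewrite ?inE; try (apply: measurableC; exact: Oset_meas).
      apply: subsetC => x; rewrite /Oset /= => hx.
      have W2nz := @W_neq0 R cplx w2 w2nz n.
      have -> : W w1 n * sval x n = (W w1 n / W w2 n) * (W w2 n * sval x n).
        by rewrite mulrA divfK.
      rewrite abM.
      apply: (le_lt_trans (y := ab (W w1 n / W w2 n) * Mt)).
        by rewrite ler_wpM2l ?ab_ge0 // ltW.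
      by rewrite -ltr_pdivlMr.
    rewrite probability_setC ?(@law R cplx p m2 w2 M2 hM2 inv2) -?probability_setC; try exact: Oset_meas.
    exact: ltW.
have [F hF] := choice step.
have mF : forall k, measurable (F k) by move=> k; case: (hF k).
have mFc : forall k, measurable (~` F k) by move=> k; apply: measurableC.
have sum_bd : forall (m : probability (lpB K p) R) (G : nat -> set (lpB K p)),
    (forall k, (m (G k) <= (eps k)%:E)%E) -> (\sum_(n <oo) m (G n) < +oo)%E.
  move=> m G hG; apply: (le_lt_trans (y := 1%:E)); last by rewrite ltry.
  apply: (le_trans _ (@epsilon_trick0 R 1 xpredT ler01)).
  by apply: lee_nneseries => // i _ _; exact: measure_ge0.
exists (lim_sup_set F); split.
- exact: limsup_meas.
- apply: lim_sup_set_cvg0 => //; apply: sum_bd => k; by case: (hF k).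
- apply/eqP; rewrite eq_le measure_ge0 andbT.
  have h0 := @lim_sup_set_cvg0 _ _ _ m2 (fun k => ~` F k) mFc.
  rewrite -h0; last by apply: sum_bd => k; case: (hF k).
  apply: le_measure; rewrite ?inE.
  - by apply: measurableC; exact: limsup_meas.
  - exact: limsup_meas.
  move=> x; rewrite /lim_sup_set setC_bigcap => -[N _ hN] n _.
  exists (maxn n N); first by rewrite /= leq_maxl.
  move=> hx; apply: hN; exists (maxn n N) => //; by rewrite /= leq_maxr.
Qed.
End Sing.

Theorem proposition3p8 (R : realType) (cplx : bool) (p : {posnum R})
  (hp : 1 <= p%:num) (u v : nat -> scalars_of R cplx)
  (u_bd : exists M : R, forall n, (1 <= n)%N -> sc_abs (u n) <= M)
  (v_bd : exists M : R, forall n, (1 <= n)%N -> sc_abs (v n) <= M)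
  (u_nz : forall n, (1 <= n)%N -> u n != 0)
  (v_nz : forall n, (1 <= n)%N -> v n != 0)
  (hratio : (limn_einf (fun n => (prod_ratio u v n)%:E) = 0)%E \/
            (limn_esup (fun n => (prod_ratio u v n)%:E) = +oo)%E)
  (mu : probability (lpB (scalars_of R cplx) p) R)
  (mv : probability (lpB (scalars_of R cplx) p) R)
  (mu_inv : shift_invariant u mu) (mv_inv : shift_invariant v mv)
  (mu_ker : mu [set x | sval x 0%N = 0] = 0%E)
  (mv_ker : mv [set x | sval x 0%N = 0] = 0%E) :
  exists A : set (lpB (scalars_of R cplx) p),
    [/\ measurable A, mu A = 0%E & mv (~` A) = 0%E].
Proof.
have [Mu hMu] := u_bd; have [Mv hMv] := v_bd.
have rE n : prod_ratio u v n = sc_abs (@W R cplx u n / @W R cplx v n) by [].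
case: hratio => [hinf|hsup].
  apply: (@sing R cplx p mu mv u v Mu Mv hMu hMv mu_inv mv_inv v_nz mu_ker) => e e0.
  apply: contrapT => hn.
  have hge : forall n, e <= prod_ratio u v n.
    by move=> n; rewrite leNgt; apply/negP => hk; apply: hn; exists n; rewrite -rE.
  have : (e%:E <= limn_einf (fun n => (prod_ratio u v n)%:E))%E.
    rewrite limn_einf_lim; apply: lime_ge; first exact: is_cvg_einfs.
    apply: nearW => n; apply: le_ereal_inf_tmp => _ [k _ <-].
    by rewrite lee_fin hge.
  by rewrite hinf lee_fin leNgt e0.
have [A [mA hA1 hA2]] : exists A : set (lpB (scalars_of R cplx) p),
    [/\ measurable A, mv A = 0%E & mu (~` A) = 0%E].
  apply: (@sing R cplx p mv mu v u Mv Mu hMv hMu mv_inv mu_inv u_nz mv_ker) => e e0.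
  have [n hn] : exists n, e^-1 < prod_ratio u v n.
    apply: contrapT => hn.
    have hle : forall n, prod_ratio u v n <= e^-1.
      by move=> n; rewrite leNgt; apply/negP => hk; apply: hn; exists n.
    have : (limn_esup (fun n => (prod_ratio u v n)%:E) <= e^-1%:E)%E.
      rewrite limn_esup_lim; apply: lime_le; first exact: is_cvg_esups.
      apply: nearW => n; apply: ge_ereal_sup => _ [k _ <-].
      by rewrite lee_fin hle.
    by rewrite hsup leNgt ltry.
  exists n; rewrite -invf_div abV.
  have r0 : 0 < prod_ratio u v n by apply: lt_trans hn; rewrite invr_gt0.
  by rewrite -[e]invrK ltf_pV2 ?posrE ?invr_gt0 // -rE.
exists (~` A); split.
- exact: measurableC.
- exact: hA2.
- by rewrite setCK.
Qed.
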